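(* Let $\boldsymbol{\lambda}=(\lambda,\mu,\nu^1,\dots,\nu^n)$ be a symmetric Schubert problem on $\mathrm{Gr}(m,\mathbb{C}^{2m})$. If \[ 2+\tfrac12\big(|\nu^1|+\dots+|\nu^n|+m-\ell(\lambda)-\ell(\mu)\big)\leq n, \] then \[ 2\leq\|\lambda\|+\|\mu\|+\|\nu^1\|+\dots+\|\nu^n\|-\tfrac12(m^2+m). \]
   Context: Partitions $\kappa$ satisfy $m\ge\kappa_1\ge\dots\ge\kappa_m\ge0$, $|\kappa|=\sum\kappa_i$, and $\ell(\kappa)=\max\{i:i\le\kappa_i\}$ is the number of boxes on the main diagonal of the Young diagram; $\kappa$ is symmetric if its Young diagram is symmetric about the main diagonal, and then $\|\kappa\|=\tfrac12(|\kappa|+\ell(\kappa))$. A symmetric Schubert problem on $\mathrm{Gr}(m,\mathbb{C}^{2m})$ is a list of nonempty symmetric partitions whose sizes sum to $m^2$, so here $|\lambda|+|\mu|+\sum_i|\nu^i|=m^2$. *)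

(* Defs.v *)
From mathcomp Require Import all_boot all_order all_algebra.
Set Implicit Arguments. Unset Strict Implicit. Unset Printing Implicit Defensive.
Import Order.TTheory GRing.Theory Num.Theory.

(* A partition kappa in the m x m box, represented as the sequence
   [:: kappa_1; ...; kappa_m] with m >= kappa_1 >= ... >= kappa_m >= 0. *)
Definition is_part (m : nat) (k : seq nat) : bool :=
  [&& size k == m, all (fun x => x <= m) k & sorted geq k].

(* kappa_i for 1 <= i <= m *)
Definition part_at (k : seq nat) (i : nat) : nat := nth 0 k i.-1.

Definition part_size (k : seq nat) : nat := sumn k.

Definition part_ell (m : nat) (k : seq nat) : nat :=
  \max_(i < m | i.+1 <= part_at k i.+1) i.+1.

Definition part_conj (m : nat) (k : seq nat) : seq nat :=
  [seq count (fun x => j <= x) k | j <- iota 1 m].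

Definition is_sym_part (m : nat) (k : seq nat) : bool :=
  is_part m k && (part_conj m k == k).

Definition part_norm (m : nat) (k : seq nat) : rat :=
  ((part_size k + part_ell m k)%:R / 2)%R.

Definition sym_schubert_problem (m : nat) (lam mu : seq nat) (nu : seq (seq nat)) : Prop :=
  [/\ all (is_sym_part m) (lam :: mu :: nu),
       all (fun k => 0 < part_size k)%N (lam :: mu :: nu)
     & (part_size lam + part_size mu + sumn (map part_size nu) = m ^ 2)%N].

(* Main.v *)
Require Import Defs.
From mathcomp Require Import all_boot all_order all_algebra.
From mathcomp Require Import ring lra zify.
Import Order.TTheory GRing.Theory Num.Theory.

Lemma sum_norm m (nu : seq (seq nat)) :
  (\sum_(k <- nu) part_norm m k =
   ((sumn (map part_size nu))%:R + (sumn (map (part_ell m) nu))%:R) / 2 :> rat)%R.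
Proof.
elim: nu => [|k nu IH]; first by rewrite big_nil /=; field.
by rewrite big_cons IH /part_norm /= !natrD; field.
Qed.

Lemma ell_pos m k : is_part m k -> (0 < part_size k)%N -> (1 <= part_ell m k)%N.
Proof.
case/and3P=> /eqP sz _ srt pos.
have k0 : (1 <= nth 0 k 0)%N.
  case: k sz srt pos => [|x k] //= sz srt pos.
  case: (posnP x) => [x0|] //; subst x.
  move: pos; rewrite /part_size /=.
  suff ->: sumn k = 0%N by [].
  elim: k {sz} srt => //= y k IHk /andP [Hy Hk].
  move: Hy; rewrite leqn0 => /eqP y0; subst y; by rewrite IHk.
have m0 : (0 < m)%N by rewrite -sz; case: k k0 {sz srt pos}.
rewrite /part_ell.
have -> : m = m.-1.+1 by rewrite prednK.
apply: (leq_trans _ (@leq_bigmax_cond _ _ (fun i : 'I_m.-1.+1 => i.+1) ord0 _)) => //.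
Qed.

Lemma nu_bound m (nu : seq (seq nat)) :
  all (is_sym_part m) nu -> all (fun k => 0 < part_size k)%N nu ->
  (2 * size nu <= sumn (map part_size nu) + sumn (map (part_ell m) nu))%N.
Proof.
elim: nu => [|k nu IH] //= /andP [Hk Hn] /andP [Pk Pn].
have := IH Hn Pn; have := @ell_pos m k (andP Hk).1 Pk; lia.
Qed.

Lemma aux (s e a b n p q m : rat) : (2 + (s + m - a - b) / 2 <= n)%R -> (2 * n <= s + e)%R ->
  (2 <= (p + a) / 2 + (q + b) / 2 + (s + e) / 2 - (p + q + s + m) / 2)%R.
Proof. move=> H Hb. lra. Qed.

Theorem lemma4p14 (m : nat) (lam mu : seq nat) (nu : seq (seq nat)) :
  sym_schubert_problem m lam mu nu ->
  (2 + ((sumn (map part_size nu))%:R + m%:R - (part_ell m lam)%:R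
          - (part_ell m mu)%:R) / 2 <= (size nu)%:R :> rat)%R ->
  (2 <= part_norm m lam + part_norm m mu + \sum_(k <- nu) part_norm m k
          - (m ^ 2 + m)%:R / 2 :> rat)%R.
Proof.
case=> /= /and3P [_ _ Hs] /and3P [_ _ Hp] Hsz H.
have Hb := @nu_bound m nu Hs Hp.
rewrite sum_norm /part_norm -Hsz.
move: H Hb.
move: (sumn (map part_size nu)) (sumn (map (part_ell m) nu)) (part_ell m lam)
  (part_ell m mu) (size nu) (part_size lam) (part_size mu) => s e a b n p q.
move=> H; rewrite -(ler_nat rat) natrM !natrD => Hb.
rewrite ?natrD.
clear Hs Hp Hsz.
move: H Hb; move: (s%:R)%R (e%:R)%R (a%:R)%R (b%:R)%R (n%:R)%R (p%:R)%R (q%:R)%R (m%:R : rat)%R.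
move=> S E A B N P Q M; move=> H Hb. exact: (@aux S E A B N P Q M H Hb).
Qed.
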